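(* Let $N\ge1$, $V=\{1,\dots,N\}$, $A$ an $N\times N$ row-stochastic matrix, and $\sigma_1,\sigma_2,\dots$ random variables with values in $2^V$. Consider $x(k+1)=A_{\sigma_k}x(k)$, $k\ge1$, with deterministic $x(1)\in\mathbb R^N$. Then the iteration reaches consensus almost surely if and only if $\lim_{k\to\infty}\mathbb P\big(\lambda(A_{\sigma_k}A_{\sigma_{k-1}}\cdots A_{\sigma_1})\ge\varepsilon\big)=0$ for every $\varepsilon>0$.
   Context: For $\sigma\subseteq V$, $A_\sigma$ is the matrix whose $j$-th row equals the $j$-th row of $A$ if $j\in\sigma$ and equals $e_j^T$ otherwise. For a row-stochastic matrix $B=(b_{ij})$, the ergodic coefficient is $\lambda(B)=1-\min_{i\neq j}\sum_{k=1}^N\min(b_{ik},b_{jk})$. The iteration reaches consensus almost surely if for every $\varepsilon>0$ and every $x(1)\in\mathbb R^N$, $\lim_{k\to\infty}\mathbb P\big(\sum_{j=1}^N (x_j(k)-\frac1N\sum_{i=1}^N x_i(k))^2\ge\varepsilon\big)=0$. *)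

(* Defs.v *)
From HB Require Import structures.
From mathcomp Require Import all_boot all_order all_algebra.
From mathcomp Require Import all_classical all_reals all_analysis.
Set Implicit Arguments. Unset Strict Implicit. Unset Printing Implicit Defensive.
Import Order.TTheory GRing.Theory Num.Theory.
Local Open Scope classical_set_scope.
Local Open Scope ring_scope.

Definition row_stochastic (R : realType) (N : nat) (A : 'M[R]_N) : Prop :=
  (forall i j, 0 <= A i j) /\ (forall i, \sum_(j < N) A i j = 1).

Definition A_sub (R : realType) (N : nat) (A : 'M[R]_N) (s : {set 'I_N}) : 'M[R]_N :=
  \matrix_(i, j) (if i \in s then A i j else (i == j)%:R).

(* Ergodic coefficient lambda(B) = 1 - min_{i<>j} sum_k min(b_ik, b_jk).
   Convention: an empty min (N = 1) is taken to be 1, so lambda(B) = 0. *)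
Definition ergodic_coef (R : realType) (N : nat) (B : 'M[R]_N) : R :=
  1 - \big[Num.min/1]_(p : 'I_N * 'I_N | p.1 != p.2)
        \sum_(k < N) Num.min (B p.1 k) (B p.2 k).

Fixpoint prod_A (R : realType) (N : nat) (A : 'M[R]_N) (T : Type)
    (sigma : nat -> T -> {set 'I_N}) (k : nat) (w : T) : 'M[R]_N :=
  match k with
  | 0 => 1%:M
  | k'.+1 => A_sub A (sigma k w) *m prod_A A sigma k' w
  end.

(* State x(k) for k >= 1: x(1) = x1, x(k+1) = A_{sigma_k} x(k). *)
Definition state (R : realType) (N : nat) (A : 'M[R]_N) (T : Type)
    (sigma : nat -> T -> {set 'I_N}) (x1 : 'cV[R]_N) (k : nat) (w : T) : 'cV[R]_N :=
  prod_A A sigma k.-1 w *m x1.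

Definition disagreement (R : realType) (N : nat) (x : 'cV[R]_N) : R :=
  \sum_(j < N) (x j 0 - (N%:R)^-1 * \sum_(i < N) x i 0) ^+ 2.

(* Consensus "almost surely" as defined in the paper (convergence in probability
   of the disagreement to 0, for every initial state). *)
Definition reaches_consensus_as (R : realType) (N : nat) (A : 'M[R]_N)
    (d : measure_display) (T : measurableType d) (P : probability T R)
    (sigma : nat -> T -> {set 'I_N}) : Prop :=
  forall (eps : R), 0 < eps -> forall x1 : 'cV[R]_N,
    (fun k => P [set w | eps <= disagreement (state A sigma x1 k w)]) @ \oo
      --> 0%E.

(* Main.v *)
Require Import Defs.
From HB Require Import structures.
From mathcomp Require Import all_boot all_order all_algebra.
From mathcomp Require Import all_classical all_reals all_analysis.
From mathcomp Require Import lra.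
Import Order.TTheory GRing.Theory Num.Theory.
Set Implicit Arguments. Unset Strict Implicit. Unset Printing Implicit Defensive.
Local Open Scope classical_set_scope.
Local Open Scope ring_scope.
Section Alg.
Variables (R : realType) (N : nat).

Lemma sum_if (b : bool) (F G : 'I_N -> R) :
  \sum_j (if b then F j else G j) = if b then \sum_j F j else \sum_j G j.
Proof. by case: b. Qed.

Lemma rs_A_sub (A : 'M[R]_N) S : row_stochastic A -> row_stochastic (A_sub A S).
Proof.
move=> [A0 A1]; split=> [i j|i]; rewrite /A_sub.
  by rewrite mxE; case: ifP => _ //; rewrite ler0n.
under eq_bigr do rewrite mxE.
rewrite sum_if; case: ifP => _; first exact: A1.
rewrite (bigD1 i) //= eqxx big1 ?addr0 // => j /negbTE.
by rewrite eq_sym => ->.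
Qed.

Lemma rs_mul (A B : 'M[R]_N) : row_stochastic A -> row_stochastic B ->
  row_stochastic (A *m B).
Proof.
move=> [A0 A1] [B0 B1]; split=> [i j|i].
  by rewrite mxE; apply: sumr_ge0 => k _; apply: mulr_ge0.
under eq_bigr do rewrite mxE.
rewrite exchange_big /=.
under eq_bigr do rewrite -mulr_sumr B1 mulr1.
exact: A1.
Qed.

Lemma rs1 : row_stochastic (1%:M : 'M[R]_N).
Proof.
split=> [i j|i]; first by rewrite mxE ler0n.
under eq_bigr do rewrite mxE.
rewrite (bigD1 i) //= eqxx big1 ?addr0 // => j /negbTE.
by rewrite eq_sym => ->.
Qed.

Lemma rs_prod (A : 'M[R]_N) (T : Type) sigma k (w : T) :
  row_stochastic A -> row_stochastic (prod_A A sigma k w).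
Proof.
move=> hA; elim: k => [|k IH] /=; first exact: rs1.
by apply: rs_mul => //; apply: rs_A_sub.
Qed.

Lemma abs_min (a b : R) : `|a - b| = a + b - 2 * Num.min a b.
Proof.
by case: (lerP a b) => h; lra.
Qed.

Lemma sum_abs (B : 'M[R]_N) i j : row_stochastic B ->
  \sum_k `|B i k - B j k| = 2 * (1 - \sum_k Num.min (B i k) (B j k)).
Proof.
move=> [B0 B1]; under eq_bigr do rewrite abs_min.
rewrite big_split /= big_split /= B1 B1 sumrN -mulr_sumr; lra.
Qed.

Lemma ergo_pair (B : 'M[R]_N) i j : i != j ->
  1 - \sum_k Num.min (B i k) (B j k) <= ergodic_coef B.
Proof.
move=> ij; rewrite /ergodic_coef lerD2l lerN2.
exact: (@bigmin_le_cond _ _ _ _ (i, j) (fun p : 'I_N * 'I_N => p.1 != p.2)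
  (fun p => \sum_(k < N) Num.min (B p.1 k) (B p.2 k))).
Qed.

Lemma ergo_le (B : 'M[R]_N) X : 0 <= X ->
  (forall i j, i != j -> 1 - \sum_k Num.min (B i k) (B j k) <= X) ->
  ergodic_coef B <= X.
Proof.
move=> X0 h; rewrite /ergodic_coef lerBlDr -lerBlDl.
apply: le_bigmin; first by lra.
move=> [i j] /= ij; have := h _ _ ij; lra.
Qed.

Lemma ergo_ge0 (B : 'M[R]_N) : row_stochastic B -> 0 <= ergodic_coef B.
Proof.
move=> [B0 B1]; rewrite /ergodic_coef subr_ge0.
apply: bigmin_le_id.
Qed.

Lemma ergo_le1 (B : 'M[R]_N) : row_stochastic B -> ergodic_coef B <= 1.
Proof.
move=> [B0 B1]; rewrite /ergodic_coef lerBlDr lerDl.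
apply: le_bigmin => // -[i j] _ /=; apply: sumr_ge0 => k _.
by rewrite le_min B0 B0.
Qed.


Lemma term_le_sum (F : 'I_N -> R) k : (forall l, 0 <= F l) -> F k <= \sum_l F l.
Proof.
move=> h; rewrite (bigD1 k) //= lerDl; apply: sumr_ge0 => l _; exact: h.
Qed.

Lemma dir1_bound (B : 'M[R]_N) (x : 'cV[R]_N) : (0 < N)%N -> row_stochastic B ->
  disagreement (B *m x) <=
    4 * N%:R * (\sum_k `|x k 0|) ^+ 2 * ergodic_coef B.
Proof.
move=> N0 hB; set M := \sum_k `|x k 0|; set y := B *m x.
have M0 : 0 <= M by apply: sumr_ge0 => k _.
have l0 := ergo_ge0 hB; have l1 := ergo_le1 hB.
set l := ergodic_coef B in l0 l1 *.
have hD : forall i j, `|y i 0 - y j 0| <= 2 * l * M.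
  move=> i j; case: (eqVneq i j) => [->|ij].
    by rewrite subrr normr0; apply: mulr_ge0 => //; apply: mulr_ge0.
  rewrite /y !mxE -sumrB.
  apply: le_trans (ler_norm_sum _ _ _) _.
  under eq_bigr do rewrite -mulrBl normrM.
  apply: le_trans (_ : \sum_k (\sum_l `|B i l - B j l|) * `|x k 0| <= _).
    apply: ler_sum => k _; apply: ler_wpM2r => //.
    by apply: (@term_le_sum (fun l => `|B i l - B j l|)).
  rewrite -mulr_sumr sum_abs //.
  have := ergo_pair B ij; rewrite -/l => h.
  by apply: ler_wpM2r => //; lra.
set D := 2 * l * M in hD.
have hm : forall j, `|y j 0 - N%:R^-1 * \sum_i y i 0| <= D.
  move=> j.
  have NN : (N%:R : R) != 0 by rewrite pnatr_eq0 -lt0n.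
  have -> : y j 0 - N%:R^-1 * \sum_i y i 0 = N%:R^-1 * \sum_i (y j 0 - y i 0).
    rewrite sumrB sumr_const card_ord mulrBr -[y j 0 *+ N]mulr_natl mulrA mulVf //.
    by rewrite mul1r.
  rewrite normrM ger0_norm ?invr_ge0 ?ler0n //.
  rewrite ler_pdivrMl ?ltr0n //.
  apply: le_trans (ler_norm_sum _ _ _) _.
  apply: le_trans (_ : \sum_(i < N) D <= _).
    by apply: ler_sum => i _; apply: hD.
  by rewrite sumr_const card_ord mulr_natl.
rewrite /disagreement.
apply: le_trans (_ : \sum_(j < N) D ^+ 2 <= _).
  apply: ler_sum => j _; have := hm j; rewrite ler_norml => /andP [h1 h2].
  rewrite -/y; nra.
rewrite sumr_const card_ord -mulr_natl /D.
have N0' : (0 : R) <= N%:R by rewrite ler0n.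
have hM : 0 <= M ^+ 2 by apply: exprn_ge0.
have hll : l ^+ 2 <= l by rewrite expr2; nra.
have : N%:R * M ^+ 2 * l ^+ 2 <= N%:R * M ^+ 2 * l.
  by apply: ler_wpM2l => //; apply: mulr_ge0.
rewrite !exprMn; nra.
Qed.

Lemma dir2_bound (B : 'M[R]_N) (eta : R) : row_stochastic B -> 0 < eta ->
  (forall m, disagreement (B *m delta_mx m 0) < eta ^+ 2) ->
  ergodic_coef B <= N%:R * eta.
Proof.
move=> hB e0 hd.
have hc : forall m i, `|B i m - N%:R^-1 * \sum_i0 B i0 m| < eta.
  move=> m i; have := hd m; rewrite /disagreement -colE.
  under eq_bigr do rewrite !mxE.
  under [X in X < _ -> _]eq_bigr do under eq_bigr do rewrite !mxE.
  set c := N%:R^-1 * _ => h.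
  have : (B i m - c) ^+ 2 < eta ^+ 2.
    apply: le_lt_trans h.
    by apply: (@term_le_sum (fun i => (B i m - c) ^+ 2)) => l; apply: sqr_ge0.
  rewrite ltr_norml => h2; apply/andP; split; nra.
apply: ergo_le; first by apply: mulr_ge0; [rewrite ler0n | apply: ltW].
move=> i j ij.
suff : 2 * (1 - \sum_k Num.min (B i k) (B j k)) <= 2 * (N%:R * eta) by lra.
rewrite -sum_abs //.
apply: le_trans (_ : \sum_(k < N) (2 * eta) <= _).
  apply: ler_sum => k _.
  have h1 := hc k i; have h2 := hc k j.
  move: h1 h2; set c := N%:R^-1 * _ => h1 h2.
  have -> : B i k - B j k = (B i k - c) - (B j k - c) by lra.
  apply: le_trans (ler_normB _ _) _; lra.
by rewrite sumr_const card_ord -mulr_natl; lra.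
Qed.

End Alg.
Lemma meas_sigma d (T : measurableType d) N (sigma : nat -> T -> {set 'I_N}) :
  (forall k S, measurable (sigma k @^-1` [set S])) ->
  forall k (F : (nat -> {set 'I_N}) -> Prop),
  measurable [set w | F (fun i => if (i < k)%N then sigma i w else finset.set0)].
Proof.
move=> hs; elim=> [|k IH] F.
  rewrite (_ : [set w | _] = [set _ | F (fun=> finset.set0)]).
    have [h|h] := pselect (F (fun=> finset.set0)).
      by rewrite (_ : [set _ | _] = setT) //; apply/seteqP; split=> w.
    by rewrite (_ : [set _ | _] = set0) //; apply/seteqP; split=> w.
  have E : forall w, (fun i => if (i < 0)%N then sigma i w else finset.set0) = fun=> finset.set0.
    by move=> w; apply/funext => i; rewrite ltn0.
  by apply/seteqP; split=> w /=.
rewrite (_ : [set w | _] = \bigcup_(S in [set: {set 'I_N}])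
   (sigma k @^-1` [set S] `&`
    [set w | F (fun i => if i == k then S else
               (fun i => if (i < k)%N then sigma i w else finset.set0) i)])).
  apply: fin_bigcup_measurable; first exact: finite_finset.
  by move=> S _; apply: measurableI => //; apply: (IH (fun t => F (fun i => if i == k then S else t i))).
have E : forall w, (fun i => if (i < k.+1)%N then sigma i w else finset.set0) =
  (fun i => if i == k then sigma k w else
               (fun i => if (i < k)%N then sigma i w else finset.set0) i).
  move=> w; apply/funext => i /=; rewrite ltnS leq_eqVlt.
  by case: eqVneq => [->|].
apply/seteqP; split=> w /=.
  by move=> h; exists (sigma k w) => //; split => //=; rewrite -E.
by move=> [S _ [/= <-]]; rewrite -E.
Qed.

Lemma prod_A_ext (R : realType) N (A : 'M[R]_N) (T T' : Type) sigma sigma'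
   (w : T) (w' : T') k :
  (forall i, (i <= k)%N -> sigma i w = sigma' i w') ->
  prod_A A sigma k w = prod_A A sigma' k w'.
Proof.
elim: k => [//|k IH] h /=.
by rewrite h // IH // => i hi; apply: h; apply: leqW.
Qed.

Lemma meas_prod (R : realType) N (A : 'M[R]_N) d (T : measurableType d)
  (sigma : nat -> T -> {set 'I_N}) :
  (forall k S, measurable (sigma k @^-1` [set S])) ->
  forall (f : 'M[R]_N -> Prop) k, measurable [set w | f (prod_A A sigma k w)].
Proof.
move=> hs f k.
have := meas_sigma hs k.+1
  (fun t => f (prod_A A (fun i (_ : unit) => t i) k tt)).
congr measurable; apply/seteqP; split=> w /=;
  by rewrite (@prod_A_ext _ _ A _ _ sigma (fun i _ => if (i < k.+1)%N then sigma i w else finset.set0) w tt) // => i hi; rewrite ltnS hi.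
Qed.

Lemma boole_seq d (T : measurableType d) (R : realType) (P : probability T R)
  (I : Type) (r : seq I) (F : I -> set T) : (forall i, measurable (F i)) ->
  (P (\big[setU/set0]_(i <- r) F i) <= \sum_(i <- r) P (F i))%E.
Proof.
move=> mF; elim: r => [|a r IH]; first by rewrite !big_nil measure0.
rewrite !big_cons; apply: le_trans (measureU2 _ _ _) _ => //.
  by apply: bigsetU_measurable.
by rewrite leeD2l.
Qed.

Lemma in_bigsetU T (I : eqType) (r : seq I) (F : I -> set T) x w :
  x \in r -> F x w -> (\big[setU/set0]_(i <- r) F i) w.
Proof.
elim: r => //= a r IH; rewrite in_cons big_cons => /orP [/eqP <- h|h h']; [by left|].
by right; apply: IH.
Qed.

Unset Implicit Arguments.
Set Strict Implicit.

Theorem lemma2 (R : realType) (N : nat) (A : 'M[R]_N)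
    (d : measure_display) (T : measurableType d) (P : probability T R)
    (sigma : nat -> T -> {set 'I_N}) :
  (0 < N)%N ->
  row_stochastic A ->
  (forall k (S : {set 'I_N}), measurable (sigma k @^-1` [set S])) ->
  reaches_consensus_as A P sigma <->
  (forall eps : R, 0 < eps ->
     (fun k => P [set w | eps <= ergodic_coef (prod_A A sigma k w)]) @ \oo
       --> 0%E).
Proof.
move=> N0 hA hs.
have mP := meas_prod A hs.
have rsP : forall k w, row_stochastic (prod_A A sigma k w).
  by move=> k w; apply: rs_prod.
split.
- move=> hc eps e0.
  set eta := eps / (N%:R + 1).
  have N1 : (0 : R) < N%:R + 1 by rewrite ltr_wpDl ?ler0n.
  have eta0 : 0 < eta by apply: divr_gt0.
  have eta20 : 0 < eta ^+ 2 by apply: exprn_gt0.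
  pose B k (m : 'I_N) := [set w | eta ^+ 2 <=
     disagreement (prod_A A sigma k w *m delta_mx m 0)].
  have hm : forall m, (fun k => P (B k m)) @ \oo --> 0%E.
    by move=> m; have := hc _ eta20 (delta_mx m 0); rewrite -cvg_shiftS.
  have hsum : (fun k => \sum_(m <- index_enum 'I_N) P (B k m))%E @ \oo --> 0%E.
    have := cvg_nnesum (F := \oo) (r := index_enum 'I_N)
       (f := fun m k => P (B k m)) (l := fun=> 0%E) (P := predT).
    rewrite big1 //; apply.
      by move=> m _; apply: nearW => k; apply: measure_ge0.
    by move=> m _; apply: hm.
  apply: (squeeze_cvge (f := fun=> 0%E)
     (h := fun k => (\sum_(m <- index_enum 'I_N) P (B k m))%E)); last first.
  + exact: hsum.
  + exact: cvg_cst.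
  apply: nearW => k; rewrite measure_ge0 /=.
  have hb : (P (\big[setU/set0]_(m <- index_enum 'I_N) B k m) <=
     \sum_(m <- index_enum 'I_N) P (B k m))%E.
    by apply: boole_seq => m; exact: (mP (fun M => eta ^+ 2 <= disagreement (M *m delta_mx m 0)) k).
  apply: le_trans hb.
  apply: le_measure; rewrite ?inE.
  + exact: (mP (fun M => eps <= ergodic_coef M) k).
  + by apply: bigsetU_measurable => m _; exact: (mP (fun M => eta ^+ 2 <= disagreement (M *m delta_mx m 0)) k).
  move=> w /= h.
  have [[m hm']|hn] := pselect (exists m, B k m w).
    by apply: (@in_bigsetU _ _ _ _ m) => //; rewrite mem_index_enum.
  exfalso; move/forallNP: hn => hn.
  have : ergodic_coef (prod_A A sigma k w) <= N%:R * eta.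
    apply: dir2_bound => // m; rewrite ltNge; apply/negP => h'.
    by apply: (hn m).
  have : N%:R * eta < eps.
    rewrite /eta mulrA ltr_pdivrMr //.
    have : (0 : R) <= N%:R by rewrite ler0n.
    nra.
  move: h; lra.
- move=> hl eps e0 x1.
  set M := \sum_k `|x1 k 0|.
  set C := 4 * N%:R * M ^+ 2 + 1.
  have C0 : 0 < C.
    rewrite /C ltr_wpDl //; apply: mulr_ge0; last exact: sqr_ge0.
    by apply: mulr_ge0 => //; rewrite ler0n.
  have H := hl (eps / C) (divr_gt0 e0 C0).
  rewrite -(cvg_shiftS _ (nbhs (0%E : \bar R))) /=.
  apply: (squeeze_cvge (f := fun=> 0%E)
     (h := fun k => P [set w | eps / C <= ergodic_coef (prod_A A sigma k w)]));
    last first.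
  + exact: H.
  + exact: cvg_cst.
  apply: nearW => k; rewrite measure_ge0 /=.
  apply: le_measure; rewrite ?inE.
  + exact: (mP (fun B => eps <= disagreement (B *m x1)) k).
  + exact: (mP (fun M => eps / C <= ergodic_coef M) k).
  move=> w /= h.
  have := dir1_bound x1 N0 (rsP k w).
  have := ergo_ge0 (rsP k w).
  rewrite ler_pdivrMr //.
  rewrite -/M /C; move: h.
  set l := ergodic_coef _; set D := disagreement _.
  have : 0 <= 4 * N%:R * M ^+ 2.
    apply: mulr_ge0; last exact: sqr_ge0.
    by apply: mulr_ge0 => //; rewrite ler0n.
  nra.
Qed.
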